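(* Let $p$ be a prime and $1\le r\leq s$ integers, and let $\varepsilon(r,s,p)=(\varepsilon_1,\dots,\varepsilon_r)$. Then $|\varepsilon_i|\leq r-1$ for $1\leq i\leq r$.
   Context: For a positive integer $n$, let $J_n$ denote the $n\times n$ matrix with $1$s in positions $(i,i)$ for $1\le i\le n$ and $(i,i+1)$ for $1\le i<n$, and $0$s elsewhere. For $1\le r\le s$, the Jordan canonical form of $J_r\otimes J_s$ over a field of characteristic $p$ is $J_{\lambda_1}\oplus\cdots\oplus J_{\lambda_r}$ with $\lambda_1\ge\cdots\ge\lambda_r>0$; write $\lambda(r,s,p)=(\lambda_1,\dots,\lambda_r)$. The deviation vector is $\varepsilon(r,s,p)=(\lambda_1-s,\dots,\lambda_r-s)$. *)

(* Defs.v *)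
From HB Require Import structures.
From mathcomp Require Import all_boot all_order all_algebra.
From mathcomp Require Export mxtens.
Set Implicit Arguments. Unset Strict Implicit. Unset Printing Implicit Defensive.
Import Order.TTheory GRing.Theory Num.Theory.
Local Open Scope ring_scope.

Definition jordan1 (F : fieldType) (n : nat) : 'M[F]_n :=
  \matrix_(i < n, j < n) (((i : nat) == j) || ((j : nat) == i.+1))%:R.

(* Similarity is
   expressed with mutually inverse P, Q (this forces \sum lam = r*s). *)
Definition is_jcf_tens (F : fieldType) (r s : nat) (lam : 'I_r -> nat) : Prop :=
  (forall i j : 'I_r, (i <= j)%N -> (lam j <= lam i)%N) /\
  (forall i : 'I_r, (0 < lam i)%N) /\
  exists (P : 'M[F]_(r * s, \sum_(i < r) lam i))
         (Q : 'M[F]_(\sum_(i < r) lam i, r * s)),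
    P *m Q = 1%:M /\ Q *m P = 1%:M /\
    Q *m (jordan1 F r *t jordan1 F s) *m P = \mxdiag_(i < r) jordan1 F (lam i).

(* Main.v *)
Require Import Defs.
From mathcomp Require Import all_boot all_order all_algebra.
From mathcomp Require Import zify ring.
Import Order.TTheory GRing.Theory Num.Theory.
Local Open Scope ring_scope.



Section Abstract.
Variable R : pzRingType.

Lemma expr_zero_ge {x : R} {n m : nat} : x ^+ n = 0 -> (n <= m)%N -> x ^+ m = 0.
Proof. by move=> Hx Hnm; rewrite -(subnKC Hnm) exprD Hx mul0r. Qed.

Lemma Dlem (X Y : R) r : GRing.comm X Y -> X ^+ r = 0 ->
  forall c b, exists K, X ^+ b * Y ^+ c = K * (X + Y + X * Y) ^+ (b + c + 1 - r).
Proof.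
move=> cXY Xr; pose N := X + Y + X * Y.
have lift : forall K a e, (e <= a)%N -> exists K', K * N ^+ a = K' * N ^+ e.
  move=> K a e Hea; exists (K * N ^+ (a - e)).
  by rewrite -mulrA -exprD subnK.
elim=> [|c IHc] b.
  case: (leqP r b) => Hb.
    by exists 0; rewrite mul0r (expr_zero_ge Xr Hb) mul0r.
  exists (X ^+ b); rewrite addn0 (_ : (b + 1 - r = 0)%N) ?expr0 ?mulr1 ?expr0 //.
  by apply/eqP; rewrite subn_eq0 addn1.
suff H : forall k b, (r - b <= k)%N ->
   exists K, X ^+ b * Y ^+ c.+1 = K * N ^+ (b + c.+1 + 1 - r) by exact: (H r b (leq_subr _ _)).
elim=> [|k IHk] {}b Hk.
  have Hb : (r <= b)%N by rewrite -subn_eq0 -leqn0.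
  by exists 0; rewrite mul0r (expr_zero_ge Xr Hb) mul0r.
case: (leqP r b) => Hb.
  by exists 0; rewrite mul0r (expr_zero_ge Xr Hb) mul0r.
have HY : Y = N - X - X * Y.
  by apply/esym/eqP; rewrite !subr_eq /N [_ + X]addrC addrA.
have E : X ^+ b * Y ^+ c.+1 =
   X ^+ b * Y ^+ c * N - X ^+ b.+1 * Y ^+ c - X ^+ b.+1 * Y ^+ c.+1.
  rewrite exprSr [X in _ * (_ * X) = _]HY !mulrBr !mulrA; congr (_ - _ - _).
  - by rewrite -mulrA -(commrX c cXY) mulrA -exprSr.
  - by rewrite -(mulrA _ _ X) -(commrX c cXY) mulrA -exprSr.
have [K1 H1] := IHc b.
have [K2 H2] := IHc b.+1.
have [K3 H3] : exists K3, X ^+ b.+1 * Y ^+ c.+1 = K3 * N ^+ (b.+1 + c.+1 + 1 - r).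
  by apply: IHk; rewrite subnS -ltnS prednK ?subn_gt0 // ltnS.
have [K1' H1'] := lift K1 (b + c + 1 - r).+1%N (b + c.+1 + 1 - r)%N ltac:(lia).
have [K2' H2'] := lift K2 (b.+1 + c + 1 - r)%N (b + c.+1 + 1 - r)%N ltac:(lia).
have [K3' H3'] := lift K3 (b.+1 + c.+1 + 1 - r)%N (b + c.+1 + 1 - r)%N ltac:(lia).
exists (K1' - K2' - K3').
by rewrite E H1 H2 H3 -/N -mulrA -exprSr H1' H2' H3' !mulrBl.
Qed.

Lemma upper_nil (X Y : R) r s : GRing.comm X Y -> X ^+ r = 0 -> Y ^+ s = 0 ->
  (X + Y + X * Y) ^+ (r + s - 1) = 0.
Proof.
move=> cXY Xr Ys.
set U := Y + X * Y.
have -> : X + Y + X * Y = X + U by rewrite /U addrA.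
have cXU : GRing.comm X U.
  rewrite /GRing.comm /U mulrDr mulrDl; congr (_ + _) => //.
  by rewrite {1}cXY mulrA.
have Us : U ^+ s = 0.
  have -> : U = Y * (1 + X) by rewrite /U mulrDr mulr1 cXY.
  rewrite exprMn_comm ?Ys ?mul0r //.
  by rewrite /GRing.comm mulrDl mulrDr mul1r mulr1 cXY.
rewrite exprDn_comm // big1 // => i _.
case: (leqP s i) => Hi.
  by rewrite (expr_zero_ge Us Hi) mulr0 mul0rn.
by rewrite (expr_zero_ge Xr (_ : r <= r + s - 1 - i)%N) ?mul0r ?mul0rn //; lia.
Qed.

End Abstract.



Section Mx.
Variable F : fieldType.

Definition nilm (n : nat) : 'M[F]_n := \matrix_(i < n, j < n) ((j : nat) == i.+1)%:R.
Definition er (n k : nat) : 'rV[F]_n := \row_(j < n) ((j : nat) == k)%:R.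

Lemma sum_delta n (G : 'I_n -> F) k c :
  (forall l : 'I_n, (l : nat) = k -> G l = c) ->
  \sum_(l < n) ((l : nat) == k)%:R * G l = (k < n)%:R * c.
Proof.
move=> HG; case: (ltnP k n) => Hk.
  rewrite (bigD1 (Ordinal Hk)) //= eqxx mul1r big1 ?addr0 ?mul1r ?HG //.
  move=> l /negP Hl; case: eqP => [Hlk|]; last by rewrite mul0r.
  by exfalso; apply: Hl; apply/eqP/val_inj.
rewrite mul0r big1 // => l _.
by case: eqP => [Hlk|]; [move: (ltn_ord l); rewrite Hlk; lia | rewrite mul0r].
Qed.

Lemma sum_deltac n k c :
  \sum_(l < n) ((l : nat) == k)%:R * c = (k < n)%:R * c :> F.
Proof. exact: sum_delta. Qed.

Lemma jordan1E n : jordan1 F n = 1%:M + nilm n.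
Proof.
apply/matrixP => i j; rewrite !mxE -[(i == j :> 'I_n)]val_eqE /=.
have [Hij|Hij] := eqVneq (i:nat) j.
  by rewrite Hij /= (_ : (j:nat) == j.+1 = false) ?addr0 //; lia.
by rewrite /= ?mulr0n ?add0r.
Qed.

Lemma nilm_exp n k : (nilm n) ^+ k = \matrix_(i < n, j < n) ((j : nat) == (i + k)%N)%:R.
Proof.
elim: k => [|k IHk].
  by apply/matrixP => i j; rewrite !mxE addn0 eq_sym.
rewrite exprSr IHk; apply/matrixP => i j; rewrite !mxE.
rewrite (eq_bigr (fun l : 'I_n => ((l:nat) == (i + k)%N)%:R * ((j:nat) == (i + k).+1)%:R)).
  rewrite sum_deltac addnS.
  case: (ltnP (i + k) n) => H; first by rewrite mul1r.
  by rewrite mul0r (_ : (j:nat) == (i + k).+1 = false) //; move: (ltn_ord j); lia.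
move=> l _; rewrite !mxE.
by case: eqP => [->|]; rewrite ?mul0r ?mul1r.
Qed.

Lemma nilm_exp_ge n k : (n <= k)%N -> (nilm n) ^+ k = 0.
Proof.
move=> Hk; rewrite nilm_exp; apply/matrixP => i j; rewrite !mxE.
by rewrite (_ : (j:nat) == (i + k)%N = false) //; move: (ltn_ord j); lia.
Qed.

Lemma er_mul n k m : er n k *m (nilm n) ^+ m = er n (k + m)%N.
Proof.
rewrite nilm_exp; apply/matrixP => i j; rewrite !mxE.
rewrite (eq_bigr (fun l : 'I_n => ((l:nat) == k)%:R * ((j:nat) == (k + m)%N)%:R)).
  rewrite sum_deltac; case: (ltnP k n) => H; first by rewrite mul1r.
  by rewrite mul0r (_ : (j:nat) == (k + m)%N = false) //; move: (ltn_ord j); lia.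
move=> l _; rewrite !mxE.
by case: eqP => [->|]; rewrite ?mul0r ?mul1r.
Qed.

Lemma er_neq0 n k : (k < n)%N -> er n k != 0.
Proof.
move=> Hk; apply/negP => /eqP /matrixP /(_ 0 (Ordinal Hk)).
by rewrite !mxE eqxx /=; move/eqP; rewrite oner_eq0.
Qed.

Lemma er_ge n k : (n <= k)%N -> er n k = 0.
Proof.
move=> Hk; apply/matrixP => i j; rewrite !mxE.
by rewrite (_ : (j:nat) == k = false) //; move: (ltn_ord j); lia.
Qed.

End Mx.



Section TS.
Variable F : fieldType.

Lemma sum_tens m n (G : 'I_(m * n) -> F) :
  \sum_p G p = \sum_(i < m) \sum_(j < n) G (mxtens_index (i, j)).
Proof.
rewrite pair_big /= (reindex (@mxtens_index m n)) /=.
  by apply: eq_bigr => -[i j] _.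
by exists (@mxtens_unindex m n) => x _; [apply: mxtens_indexK | apply: mxtens_unindexK].
Qed.

Lemma vtens m n p q (v : 'rV[F]_(m * n)) (A : 'M[F]_(m, p)) (B : 'M[F]_(n, q)) K L :
  (v *m (A *t B)) 0 (mxtens_index (K, L)) =
  \sum_(i < m) \sum_(j < n) v 0 (mxtens_index (i, j)) * (A i K * B j L).
Proof.
rewrite !mxE sum_tens; apply: eq_bigr => i _; apply: eq_bigr => j _.
by rewrite tensmxE.
Qed.

Lemma idx_eq m n (i k : 'I_m) (j l : 'I_n) :
  (mxtens_index (i, j) == mxtens_index (k, l)) = (i == k) && (j == l).
Proof. by rewrite (can_eq (@mxtens_indexK m n)) xpair_eqE. Qed.

Lemma tens11 m n : (1%:M : 'M[F]_m) *t (1%:M : 'M[F]_n) = 1%:M.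
Proof.
apply/matrixP => x y.
case: (mxtens_indexP x) => i j; case: (mxtens_indexP y) => k l.
rewrite tensmxE !mxE idx_eq.
by case: (i == k); case: (j == l); rewrite /= ?mulr1 ?mulr0 ?mul0r.
Qed.

Variables r s : nat.
Definition Xm : 'M[F]_(r * s) := nilm F r *t (1%:M : 'M[F]_s).
Definition Ym : 'M[F]_(r * s) := (1%:M : 'M[F]_r) *t nilm F s.
Definition Nm : 'M[F]_(r * s) := Xm + Ym + Xm * Ym.

Lemma XYmul : Xm * Ym = nilm F r *t nilm F s.
Proof. by rewrite -mulmxE /Xm /Ym tensmx_mul mulmx1 mul1mx. Qed.

Lemma XYcomm : GRing.comm Xm Ym.
Proof.
rewrite /GRing.comm XYmul -mulmxE /Xm /Ym tensmx_mul mulmx1 mul1mx //.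
Qed.

Lemma Xpow b c : Xm ^+ b * Ym ^+ c = (nilm F r) ^+ b *t (nilm F s) ^+ c.
Proof.
have HX : forall k, Xm ^+ k = (nilm F r) ^+ k *t (1%:M : 'M[F]_s).
  elim=> [|k IH]; first by rewrite !expr0 -!idmxE tens11.
  by rewrite exprSr IH -!mulmxE tensmx_mul mulmx1 mulmxE -exprSr.
have HY : forall k, Ym ^+ k = (1%:M : 'M[F]_r) *t (nilm F s) ^+ k.
  elim=> [|k IH]; first by rewrite !expr0 -!idmxE tens11.
  by rewrite exprSr IH -!mulmxE tensmx_mul mulmx1 mulmxE -exprSr.
by rewrite HX HY -mulmxE tensmx_mul mulmx1 mul1mx.
Qed.

Lemma Xr : Xm ^+ r = 0.
Proof. by have := Xpow r 0; rewrite !expr0 mulr1 (@nilm_exp_ge F r r) // tens0mx. Qed.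

Lemma Ys : Ym ^+ s = 0.
Proof. by have := Xpow 0 s; rewrite !expr0 mul1r (@nilm_exp_ge F s s) // tensmx0. Qed.

Lemma Nm_upper : Nm ^+ (r + s - 1) = 0.
Proof. exact: upper_nil XYcomm Xr Ys. Qed.

Lemma TmE : jordan1 F r *t jordan1 F s - 1%:M = Nm.
Proof.
apply/matrixP => x y.
case: (mxtens_indexP x) => i j; case: (mxtens_indexP y) => k l.
rewrite /Nm XYmul /Xm /Ym !jordan1E !mxE !mxtens_indexK /= idx_eq.
case: (i == k); case: (j == l); rewrite /= ?mulr1n ?mulr0n; ring.
Qed.


Definition fv (v : 'rV[F]_(r * s)) (k l : nat) : F :=
  \sum_(i < r) \sum_(j < s)
     ((i : nat) == k)%:R * (((j : nat) == l)%:R * v 0 (mxtens_index (i, j))).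

Lemma sum_delta0 n (G : 'I_n -> F) k : (n <= k)%N ->
  \sum_(l < n) ((l : nat) == k)%:R * G l = 0.
Proof.
move=> Hk; rewrite (@sum_delta F n G k 0); first by rewrite mulr0.
by move=> l Hl; move: (ltn_ord l); rewrite Hl; lia.
Qed.

Lemma sum_delta1 n (G : 'I_n -> F) (i0 : 'I_n) :
  \sum_(l < n) ((l : nat) == i0)%:R * G l = G i0.
Proof.
rewrite (@sum_delta F n G i0 (G i0)) ?ltn_ord ?mul1r //.
by move=> l /val_inj ->.
Qed.

Lemma fv_ord v (i : 'I_r) (j : 'I_s) : fv v i j = v 0 (mxtens_index (i, j)).
Proof.
rewrite /fv (eq_bigr (fun i' : 'I_r => ((i' : nat) == i)%:R * v 0 (mxtens_index (i', j)))).
  by rewrite sum_delta1.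
by move=> i' _; rewrite -mulr_sumr sum_delta1.
Qed.

Lemma fv_outr v k l : (r <= k)%N -> fv v k l = 0.
Proof. by move=> H; rewrite /fv (eq_bigr (fun i' : 'I_r => ((i' : nat) == k)%:R *
  \sum_(j < s) (((j : nat) == l)%:R * v 0 (mxtens_index (i', j))))) ?sum_delta0 // => i _; rewrite mulr_sumr.
Qed.

Lemma fv_outs v k l : (s <= l)%N -> fv v k l = 0.
Proof. by move=> H; rewrite /fv big1 // => i _; rewrite -mulr_sumr sum_delta0 ?mulr0. Qed.

Lemma addE m n (A B : 'M[F]_(m, n)) i j : (A + B) i j = A i j + B i j.
Proof. by rewrite mxE. Qed.

Lemma natb_and (a b : bool) : ((a && b) : nat)%:R = (a : nat)%:R * (b : nat)%:R :> F.
Proof. by case: a; case: b; rewrite /= ?mulr1 ?mulr0. Qed.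

Lemma eqS_pred (K i : nat) : (K == i.+1) = (0 < K)%N && (i == K.-1).
Proof. by case: K => [|k] //=; rewrite eqSS eq_sym. Qed.

Lemma vNm_entry v (K : 'I_r) (L : 'I_s) :
  (v *m Nm) 0 (mxtens_index (K, L)) =
  (0 < K)%:R * fv v K.-1 L + (0 < L)%:R * fv v K L.-1
  + (0 < K)%:R * ((0 < L)%:R * fv v K.-1 L.-1).
Proof.
rewrite /Nm XYmul !mulmxDr !addE /Xm /Ym !vtens /fv !mulr_sumr.
have HK : forall i : 'I_r, ((K : nat) == i.+1) = (0 < K)%N && ((i : nat) == K.-1).
  by move=> i; apply: eqS_pred.
have HL : forall j : 'I_s, ((L : nat) == j.+1) = (0 < L)%N && ((j : nat) == L.-1).
  by move=> j; apply: eqS_pred.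
congr (_ + _ + _); apply eq_bigr => i _; rewrite !mulr_sumr; apply eq_bigr => j _;
  rewrite !mxE ?HK ?HL -?val_eqE /= ?natb_and; ring.
Qed.


Lemma KER v (Hv : v *m Nm = 0) k l : (k < r)%N -> (l.+1 < s)%N ->
  fv v k l + (0 < k)%:R * (fv v k.-1 l.+1 + fv v k.-1 l) = 0.
Proof.
move=> Hk Hl.
have := vNm_entry v (Ordinal Hk) (Ordinal Hl); rewrite Hv mxE /= mul1r => H.
by rewrite H; ring.
Qed.

Lemma graded v (Hv : v *m Nm = 0) (r0 : (0 < r)%N) d :
  (d.+1 < s)%N -> forall k, (k <= d)%N -> fv v k (d - k) = 0.
Proof.
elim: d => [|d IHd] Hd k Hk.
  have -> : k = 0%N by lia.
  by have := @KER v Hv _ _ r0 Hd; rewrite /= mul0r addr0.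
elim: k Hk => [|k IHk] Hk.
  by have := @KER v Hv _ _ r0 Hd; rewrite /= mul0r addr0 subn0.
case: (leqP r k.+1) => Hkr; first by rewrite fv_outr.
have Hs : ((d - k).+1 < s)%N by lia.
have := @KER v Hv k.+1 (d - k) Hkr Hs.
rewrite /= mul1r.
have -> : (d - k).+1 = (d.+1 - k)%N by lia.
rewrite IHk; last by lia.
rewrite IHd; [|lia|lia].
by rewrite !addr0 subSS.
Qed.


Lemma elem_sub (r0 : (0 < r)%N) (rs : (r <= s)%N) (a : 'I_r) (b : 'I_s) :
  (s <= (a + b).+1)%N -> ((delta_mx (0 : 'I_1) (mxtens_index (a, b)) : 'rV[F]_(r * s)) <= Nm ^+ (s - r))%MS.
Proof.
move=> Hab.
pose c := (s.-1 - a)%N.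
have [K HK] := @Dlem _ _ _ _ XYcomm Xr c a.
have He : (a + c + 1 - r)%N = (s - r)%N.
  move: (ltn_ord a) (ltn_ord b); rewrite /c; lia.
rewrite He -/Nm in HK.
have Hb' : (b - c < s)%N by move: (ltn_ord b); lia.
pose z : 'I_r := Ordinal r0.
pose b' : 'I_s := Ordinal Hb'.
have -> : (delta_mx (0 : 'I_1) (mxtens_index (a, b)) : 'rV[F]_(r * s)) =
   delta_mx 0 (mxtens_index (z, b')) *m (Xm ^+ a * Ym ^+ c).
  rewrite -rowE Xpow; apply/matrixP => x y; rewrite [x]ord1.
  case: (mxtens_indexP y) => K' L'.
  rewrite [in RHS]mxE tensmxE !nilm_exp !mxE idx_eq /= add0n subnK; last first.
    move: (ltn_ord a) (ltn_ord b); rewrite /c; lia.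
  by rewrite natb_and.
rewrite HK (_ : K * Nm ^+ (s - r) = K *m Nm ^+ (s - r)) // mulmxA; apply: submxMl.
Qed.

Lemma KL (r0 : (0 < r)%N) (rs : (r <= s)%N) (v : 'rV[F]_(r * s)) :
  v *m Nm = 0 -> (v <= Nm ^+ (s - r))%MS.
Proof.
move=> Hv; rewrite [v]matrix_sum_delta.
apply: summx_sub => i _; apply: summx_sub => y _; rewrite [i]ord1.
case: (mxtens_indexP y) => a b.
case: (leqP s (a + b).+1) => Hab.
  by apply: scalemx_sub; apply: elem_sub.
have := @graded v Hv r0 (a + b)%N Hab a (leq_addr _ _).
rewrite (_ : (a + b - a)%N = b) ?fv_ord; last by lia.
by move->; rewrite scale0r sub0mx.
Qed.

End TS.



Section DS.
Variable F : fieldType.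

Lemma mxrow_diag_pow p (p_ : 'I_p -> nat) (B_ : forall i, 'M[F]_(p_ i))
   (v_ : forall i, 'rV[F]_(p_ i)) k :
  \mxrow_j v_ j *m (\mxdiag_j B_ j) ^+ k = \mxrow_j (v_ j *m (B_ j) ^+ k).
Proof.
elim: k => [|k IH].
  rewrite expr0 -idmxE mulmx1; apply/eq_mxrow => j.
  by rewrite expr0 -idmxE mulmx1.
rewrite exprSr -mulmxE mulmxA IH mul_mxrow_mxdiag; apply/eq_mxrow => j.
by rewrite exprSr -mulmxE mulmxA.
Qed.

Lemma conj_pow m n (Q : 'M[F]_(n, m)) (A : 'M[F]_m) (P : 'M[F]_(m, n)) :
  P *m Q = 1%:M -> Q *m P = 1%:M -> forall k, (Q *m A *m P) ^+ k = Q *m A ^+ k *m P.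
Proof.
move=> PQ QP; elim=> [|k IH].
  by rewrite !expr0 -!idmxE mulmx1.
rewrite exprSr IH [A ^+ k.+1]exprSr -!mulmxE -!mulmxA (mulmxA P Q) PQ mul1mx.
by rewrite !mulmxA.
Qed.

Lemma Dm1 p (lam : 'I_p -> nat) :
  \mxdiag_j jordan1 F (lam j) - 1%:M = \mxdiag_j nilm F (lam j).
Proof.
rewrite -(@mxdiagZ F _ (fun j => lam j) 1) -mxdiagB; apply: eq_mxdiag => j.
by rewrite jordan1E addrC addKr.
Qed.

End DS.

Theorem lemma12 (p : nat) (F : fieldType) (r s : nat) (lam : 'I_r -> nat) :
  prime p -> p \in [pchar F] -> (1 <= r)%N -> (r <= s)%N ->
  @is_jcf_tens F r s lam ->
  forall i : 'I_r, `|(lam i)%:Z - s%:Z| <= (r - 1)%:Z.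
Proof.
move=> _ _ r1 rs [_ [pos [P [Q [PQ [QP HD]]]]]] i.
have HDm : Q *m Nm F r s *m P = \mxdiag_j nilm F (lam j).
  by rewrite -TmE mulmxBr mulmxBl HD mulmx1 QP Dm1.
set Dm := \mxdiag_j nilm F (lam j) in HDm.
have Hup : (lam i <= r + s - 1)%N.
  rewrite leqNgt; apply/negP => Hlt.
  have H0 : Dm ^+ (r + s - 1) = 0 by rewrite -HDm conj_pow // Nm_upper mulmx0 mul0mx.
  have := @mxrow_diag_pow F _ _ (fun j => nilm F (lam j))
     (fun j => if j == i then er F (lam j) 0 else 0) (r + s - 1).
  rewrite -/Dm H0 mulmx0 => /(f_equal (fun M => submxrow M i)).
  rewrite submxrow0 mxrowK eqxx er_mul add0n => /esym /eqP.
  by rewrite (negbTE (@er_neq0 F _ _ Hlt)).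
have Hlow : (s - r < lam i)%N.
  rewrite ltnNge; apply/negP => Hle.
  pose v := \mxrow_j (if j == i then er F (lam j) (lam j).-1 else 0).
  have Hv : v *m Dm = 0.
    rewrite /v mul_mxrow_mxdiag -(@mxrow0 F _ (fun j => lam j) 1); apply/eq_mxrow => j.
    case: eqP => [->|_]; last by rewrite mul0mx.
    rewrite -[nilm F (lam i)]expr1 er_mul er_ge //.
    by move: (pos i); lia.
  have Hw : (v *m Q) *m Nm F r s = 0.
    have -> : v *m Q *m Nm F r s = v *m Dm *m Q.
      by rewrite -HDm -!mulmxA PQ mulmx1.
    by rewrite Hv mul0mx.
  have [u Hu] := submxP (@KL F r s r1 rs _ Hw).
  have Hv2 : v = (u *m P) *m Dm ^+ (s - r).
    rewrite -HDm conj_pow // !mulmxA -(mulmxA u P Q) PQ mulmx1 -Hu.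
    by rewrite -mulmxA QP mulmx1.
  rewrite -(submxrowK (u *m P)) mxrow_diag_pow in Hv2.
  move: Hv2 => /(f_equal (fun M => submxrow M i)).
  rewrite /v !mxrowK eqxx (@nilm_exp_ge F _ _ Hle) mulmx0 => /eqP.
  by rewrite (negbTE (@er_neq0 F _ _ _)) //; move: (pos i); lia.
rewrite ler_norml; apply/andP; split; lia.
Qed.
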